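(* Let ${\cal C}$ be a semi-degenerate congruence-modular variety and $A\in{\cal C}$ a semiprime algebra. For any nonzero cardinal $\kappa$, the conditions $(iv)_{{\rm Con}(A)}$, $(4)_{\kappa,{\rm Con}(A)}$, $(4)_{<\infty,{\rm Con}(A)}$ and $(4)_{{\rm Con}(A)}$ are equivalent.
   Context: ${\cal C}$ semi-degenerate: no nontrivial member has a one-element subalgebra. ${\rm Con}(A)$: congruence lattice with bounds $\Delta_A,\nabla_A=A^2$; $[\cdot,\cdot]_A$: modular commutator. A congruence $\phi\ne\nabla_A$ is prime if $[\theta,\zeta]_A\subseteq\phi$ implies $\theta\subseteq\phi$ or $\zeta\subseteq\phi$. $\rho_A(\theta)$: intersection of all prime congruences containing $\theta$. $A$ semiprime: $\rho_A(\Delta_A)=\Delta_A$. For a bounded lattice $L$: ${\rm Ann}_L(U)=\{x\in L\mid x\wedge u=0\ \forall u\in U\}$, ${\rm Ann}_L(a)={\rm Ann}_L(\{a\})$, $(V]_L$ the ideal generated by $V$. $(iv)_L$: for all $a,b\in L$, ${\rm Ann}_L(a\wedge b)=({\rm Ann}_L(a)\cup{\rm Ann}_L(b)]_L$. $(4)_{\kappa,L}$: $(iv)_L$ holds and for each $U\subseteq L$ with $|U|\le\kappa$ there is $x\in L$ with ${\rm Ann}_L({\rm Ann}_L(U))={\rm Ann}_L(x)$; $(4)_{<\infty,L}$: the same for all finite $U$; $(4)_L$: the same for all $U\subseteq L$. *)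

(* Defs.v *)
From Stdlib Require Import List.
Import ListNotations.


Record signature := Signature { op : Type; arity : op -> nat }.

Definition args (n : nat) := { i : nat | i < n }.

Record algebra (S : signature) := Algebra {
  carrier :> Type;
  interp : forall f : op S, (args (arity S f) -> carrier) -> carrier }.
Arguments interp {S} a f _.

Inductive term (S : signature) (V : Type) : Type :=
| Var : V -> term S V
| App : forall f : op S, (args (arity S f) -> term S V) -> term S V.
Arguments Var {S V} _.
Arguments App {S V} f _.

Fixpoint eval {S : signature} {V : Type} (A : algebra S) (v : V -> A)
  (t : term S V) : A :=
  match t with
  | Var x => v x
  | App f ts => interp A f (fun i => eval A v (ts i))
  end.

(** Varieties, given as equational classes (Birkhoff): a set of identities. *)
Definition identities (S : signature) := term S nat -> term S nat -> Prop.

Definition in_variety {S} (Sigma : identities S) (A : algebra S) : Prop :=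
  forall s t, Sigma s t -> forall v : nat -> A, eval A v s = eval A v t.

Definition rel (A : Type) := A -> A -> Prop.
Definition subrel {A} (r s : rel A) : Prop := forall x y, r x y -> s x y.
Definition releq {A} (r s : rel A) : Prop := forall x y, r x y <-> s x y.
Definition Delta (A : Type) : rel A := fun x y => x = y.
Definition Nabla (A : Type) : rel A := fun _ _ => True.

Definition is_con {S} (A : algebra S) (th : rel A) : Prop :=
  (forall x, th x x) /\ (forall x y, th x y -> th y x) /\
  (forall x y z, th x y -> th y z -> th x z) /\
  (forall f (u w : args (arity S f) -> A),
      (forall i, th (u i) (w i)) -> th (interp A f u) (interp A f w)).

Definition cmeet {A : Type} (a b : rel A) : rel A := fun x y => a x y /\ b x y.
Definition cjoin {S} (A : algebra S) (a b : rel A) : rel A :=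
  fun x y => forall g, is_con A g -> subrel a g -> subrel b g -> g x y.
(** join of a finite list of congruences (the empty join is Delta_A) *)
Definition cbigjoin {S} (A : algebra S) (s : list (rel A)) : rel A :=
  fun x y => forall g, is_con A g -> (forall a, In a s -> subrel a g) -> g x y.

Definition con_modular {S} (A : algebra S) : Prop :=
  forall a b c, is_con A a -> is_con A b -> is_con A c -> subrel a c ->
    releq (cjoin A a (cmeet b c)) (cmeet (cjoin A a b) c).

Definition congruence_modular {S} (Sigma : identities S) : Prop :=
  forall B : algebra S, in_variety Sigma B -> con_modular B.

(** Semi-degenerate: no nontrivial member has a one-element subalgebra. *)
Definition semi_degenerate {S} (Sigma : identities S) : Prop :=
  forall B : algebra S, in_variety Sigma B -> (exists x y : B, x <> y) ->
    ~ (exists e : B, forall f, interp B f (fun _ => e) = e).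

Definition centralizes {S} (A : algebra S) (a b d : rel A) : Prop :=
  forall (t : term S (nat + nat)) (p q u w : nat -> A),
    (forall i, a (p i) (q i)) -> (forall j, b (u j) (w j)) ->
    d (eval A (fun z => match z with inl i => p i | inr j => u j end) t)
      (eval A (fun z => match z with inl i => p i | inr j => w j end) t) ->
    d (eval A (fun z => match z with inl i => q i | inr j => u j end) t)
      (eval A (fun z => match z with inl i => q i | inr j => w j end) t).

Definition commutator {S} (A : algebra S) (a b : rel A) : rel A :=
  fun x y => forall d, is_con A d -> centralizes A a b d -> d x y.

Definition prime_con {S} (A : algebra S) (phi : rel A) : Prop :=
  is_con A phi /\ ~ releq phi (Nabla A) /\
  forall th ze, is_con A th -> is_con A ze ->
    subrel (commutator A th ze) phi -> subrel th phi \/ subrel ze phi.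

Definition rho {S} (A : algebra S) (th : rel A) : rel A :=
  fun x y => forall phi, prime_con A phi -> subrel th phi -> phi x y.

Definition semiprime {S} (A : algebra S) : Prop := releq (rho A (Delta A)) (Delta A).

Definition cset {S} (A : algebra S) := rel A -> Prop.
Definition seteq {S} {A : algebra S} (P Q : cset A) : Prop := forall r, P r <-> Q r.
Definition in_Con {S} (A : algebra S) (U : cset A) : Prop :=
  forall u, U u -> is_con A u.

Definition Ann {S} (A : algebra S) (U : cset A) : cset A :=
  fun x => is_con A x /\ forall u, U u -> releq (cmeet x u) (Delta A).
Definition Ann1 {S} (A : algebra S) (a : rel A) : cset A :=
  Ann A (fun u => u = a).
Definition ideal_gen {S} (A : algebra S) (V : cset A) : cset A :=
  fun x => is_con A x /\ exists s : list (rel A),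
     (forall v, In v s -> V v) /\ subrel x (cbigjoin A s).

Definition cond_iv {S} (A : algebra S) : Prop :=
  forall a b, is_con A a -> is_con A b ->
    seteq (Ann1 A (cmeet a b)) (ideal_gen A (fun x => Ann1 A a x \/ Ann1 A b x)).

Definition annann_principal {S} (A : algebra S) (U : cset A) : Prop :=
  exists x, is_con A x /\ seteq (Ann A (Ann A U)) (Ann1 A x).

(** |U| <= |K| : U is covered by a family indexed by K (K is nonempty below). *)
Definition card_le {S} {A : algebra S} (U : cset A) (K : Type) : Prop :=
  exists g : K -> rel A, forall u, U u -> exists k, g k = u.

Definition finite_set {S} {A : algebra S} (U : cset A) : Prop :=
  exists s : list (rel A), forall u, U u -> In u s.

Definition cond4_kappa {S} (A : algebra S) (K : Type) : Prop :=
  cond_iv A /\ forall U, in_Con A U -> card_le U K -> annann_principal A U.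
Definition cond4_fin {S} (A : algebra S) : Prop :=
  cond_iv A /\ forall U, in_Con A U -> finite_set U -> annann_principal A U.
Definition cond4_all {S} (A : algebra S) : Prop :=
  cond_iv A /\ forall U, in_Con A U -> annann_principal A U.

(* Main.v *)
Require Import Defs.
From Stdlib Require Import Classical.

Lemma eval_con {S} (A : algebra S) (th : rel A) {V} (v1 v2 : V -> A) (t : term S V) :
  is_con A th -> (forall z, th (v1 z) (v2 z)) -> th (eval A v1 t) (eval A v2 t).
Proof.
  intros Hc Hv. induction t as [z|f ts IH]; simpl.
  - apply Hv.
  - destruct Hc as (_ & _ & _ & Hop). apply Hop. intro i. apply IH.
Qed.

Lemma meet_con {S} (A : algebra S) (a b : rel A) :
  is_con A a -> is_con A b -> is_con A (cmeet a b).
Proof.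
  intros (Ra & Sa & Ta & Oa) (Rb & Sb & Tb & Ob); unfold cmeet.
  split; [|split; [|split]].
  - intro x; auto.
  - intros x y [H1 H2]; auto.
  - intros x y z [H1 H2] [H3 H4]; eauto.
  - intros f u w H; split; [apply Oa|apply Ob]; intro i; apply H.
Qed.

Lemma comm_le_meet {S} (A : algebra S) (a b : rel A) :
  is_con A a -> is_con A b -> subrel (commutator A a b) (cmeet a b).
Proof.
  intros Ha Hb x y H. apply H. apply meet_con; auto.
  intros t p q u w Hp Hu [H1 H2]. split.
  - pose proof Ha as (Ra & Sa & Ta & Oa).
    apply Ta with (eval A (fun z => match z with inl i => p i | inr j => u j end) t).
    { apply eval_con; [exact Ha|]. intros [i|j]; [apply Sa, Hp|apply Ra]. }
    apply Ta with (eval A (fun z => match z with inl i => p i | inr j => w j end) t).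
    { exact H1. }
    apply eval_con; [exact Ha|]. intros [i|j]; [apply Hp|apply Ra].
  - apply eval_con; [exact Hb|]. pose proof Hb as (Rb & _).
    intros [i|j]; [apply Rb|apply Hu].
Qed.

Definition bigJ {S} (A : algebra S) (W : cset A) : rel A :=
  fun x y => forall g, is_con A g -> (forall w, W w -> subrel w g) -> g x y.

Lemma bigJ_con {S} (A : algebra S) (W : cset A) : is_con A (bigJ A W).
Proof.
  unfold bigJ; split; [|split; [|split]].
  - intros x g Hg _. apply (proj1 Hg).
  - intros x y H g Hg Hw. apply (proj1 (proj2 Hg)). apply H; auto.
  - intros x y z H1 H2 g Hg Hw. pose proof Hg as (_ & _ & T & _).
    apply T with y; [apply H1|apply H2]; auto.
  - intros f u w H g Hg Hw. pose proof Hg as (_ & _ & _ & O).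
    apply O. intro i. apply H; auto.
Qed.

Lemma key {S} (A : algebra S) (Hsp : semiprime A) (r : rel A) (W : cset A) :
  is_con A r -> (forall w, W w -> is_con A w /\ forall a b, r a b -> w a b -> a = b) ->
  forall a b, r a b -> bigJ A W a b -> a = b.
Proof.
  intros Hr HW a b Hab Hx. apply (proj1 (Hsp a b)).
  intros phi [Hphi [_ Hpr]] _.
  destruct (classic (subrel r phi)) as [Hs|Hs].
  - apply Hs, Hab.
  - apply Hx; [exact Hphi|]. intros w Hw.
    destruct (HW w Hw) as [Hwc Hw0].
    assert (Hc : subrel (commutator A r w) phi).
    { intros c d Hcd. destruct (comm_le_meet A r w Hr Hwc c d Hcd) as [H1 H2].
      rewrite (Hw0 c d H1 H2). apply (proj1 Hphi). }
    destruct (Hpr r w Hr Hwc Hc) as [H|H]; [contradiction|exact H].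
Qed.

Lemma annann {S} (A : algebra S) (Hsp : semiprime A) (U : cset A) :
  annann_principal A U.
Proof.
  exists (bigJ A (Ann A U)). split; [apply bigJ_con|].
  intro r; unfold Ann1, Ann; split.
  - intros [Hr Hu]. split; [exact Hr|]. intros u ->. intros x y; split.
    + intros [H1 H2]. unfold Delta. eapply key; eauto.
      intros w Hw. split; [apply Hw|]. intros a b Ha Hb. apply (Hu w Hw a b). split; auto.
    + intros E; unfold Delta in E; subst. split; [apply (proj1 Hr)|apply (proj1 (bigJ_con A _))].
  - intros [Hr Hu]. split; [exact Hr|]. intros w Hw x y; split.
    + intros [H1 H2]. apply (proj1 (Hu _ eq_refl x y)). split; [exact H1|].
      intros g Hg Hall. apply (Hall w Hw). exact H2.
    + intros E; unfold Delta in E; subst. split; [apply (proj1 Hr)|]. destruct Hw as [Hw _]. apply (proj1 Hw).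
Qed.

Theorem proposition2p27 (S : signature) (Sigma : identities S)
  (HCM : congruence_modular Sigma) (Hsd : semi_degenerate Sigma)
  (A : algebra S) (HA : in_variety Sigma A) (Hsp : semiprime A)
  (K : Type) (k0 : K) :
  (cond_iv A <-> cond4_kappa A K) /\
  (cond_iv A <-> cond4_fin A) /\
  (cond_iv A <-> cond4_all A).
Proof.
  split; [|split]; split; try (intros [H _]; exact H);
    intro H; split; auto; intros; apply annann; auto.
Qed.
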